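(* $d^2\,(d')^2=\delta^2\,(1-d^2)\,(d^2-\lambda^2)$.
   Context: Let $0<\kappa<1$ and $\lambda=\sqrt{1-\kappa^2}$. Let $F(\tfrac16,\tfrac56;\tfrac12;\cdot)$ denote the Gauss hypergeometric function. Define $u$ as a function of $\phi$ near $0$ by $u=\int_0^{\sin\phi}F(\tfrac16,\tfrac56;\tfrac12;\kappa^2t^2)\,\frac{dt}{\sqrt{1-t^2}}$; near the origin (fixing $0$) this inverts to a holomorphic function $u\mapsto\phi(u)$ with $\phi(0)=0$. Let $\psi$ be the holomorphic function near $0$ with $\psi(0)=0$ and $\sin\psi=\kappa\sin\phi$. Set $d=\cos\psi$ and $\delta=\phi'$, as functions of $u$ on a small disc about $0$; primes denote $d/du$. *)

(* Defs.v *)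
From Stdlib Require Import Reals Factorial.
From Coquelicot Require Import Coquelicot.
Open Scope R_scope.

(* Sum of a convergent complex series (the unique limit; junk if divergent). *)
Definition Cseries (a : nat -> C) : C :=
  @iota (CompleteNormedModule.CompleteSpace C_AbsRing C_CompleteNormedModule)
    (fun l : C => @is_series C_AbsRing C_NormedModule a l).

Fixpoint Cpow (z : C) (n : nat) : C :=
  match n with O => RtoC 1 | S m => Cmult z (Cpow z m) end.

Definition Cexp (z : C) : C :=
  Cseries (fun n => Cmult (RtoC (/ INR (fact n))) (Cpow z n)).
Definition Csin (z : C) : C :=
  Cdiv (Cminus (Cexp (Cmult Ci z)) (Cexp (Copp (Cmult Ci z)))) (Cmult (RtoC 2) Ci).
Definition Ccos (z : C) : C :=
  Cdiv (Cplus (Cexp (Cmult Ci z)) (Cexp (Copp (Cmult Ci z)))) (RtoC 2).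

Definition Csqrt (w : C) : C :=
  let x := fst w in let y := snd w in
  (sqrt ((Cmod w + x) / 2),
   (if Rlt_dec y 0 then -1 else 1) * sqrt ((Cmod w - x) / 2)).

Fixpoint poch (a : R) (n : nat) : R :=
  match n with O => 1 | S m => poch a m * (a + INR m) end.

Definition hyp2F1 (a b c : R) (z : C) : C :=
  Cseries (fun n => Cmult (RtoC (poch a n * poch b n / (poch c n * INR (fact n))))
                          (Cpow z n)).

(* u(phi) = int_0^{sin phi} F(1/6,5/6;1/2;kappa^2 t^2) dt / sqrt(1-t^2),
   the complex integral taken along the segment t = s * sin phi, s in [0,1]. *)
Definition u_of (kappa : R) (phi : C) : C :=
  let z := Csin phi in
  @RInt C_R_CompleteNormedModule
    (fun s : R =>
       let t := Cmult (RtoC s) z in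
       Cmult (Cdiv (hyp2F1 (1/6) (5/6) (1/2) (Cmult (RtoC (kappa ^ 2)) (Cmult t t)))
                   (Csqrt (Cminus (RtoC 1) (Cmult t t))))
             z) 0 1.

Definition in_disc (r : R) (w : C) : Prop := Cmod w < r.

Definition Cderiv (f : C -> C) (w l : C) : Prop :=
  @is_derive C_AbsRing C_NormedModule f w l.

(* Main.v *)
Require Import Defs.
From Stdlib Require Import Reals Lra Lia Factorial.
From Coquelicot Require Import Coquelicot.
Open Scope R_scope.

Lemma sum_n_Cmod (a : nat -> C) (b : nat -> R) N :
  (forall n, Cmod (a n) <= b n) -> Cmod (sum_n a N) <= sum_n b N.
Proof.
  intros H. induction N.
  - rewrite !sum_O. apply H.
  - rewrite !sum_Sn. eapply Rle_trans. apply Cmod_triangle.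
    apply Rplus_le_compat. exact IHN. apply H.
Qed.

Lemma series_Cmod_le (a : nat -> C) (b : nat -> R) l L :
  is_series (V:=C_NormedModule) a l -> is_series b L ->
  (forall n, Cmod (a n) <= b n) -> Cmod l <= L.
Proof.
  intros Ha Hb H.
  assert (H1 : is_lim_seq (fun N => Cmod (sum_n a N)) (Cmod l)).
  { change (filterlim (fun N => @norm C_AbsRing C_NormedModule (sum_n a N)) eventually (locally (@norm C_AbsRing C_NormedModule l))).
    eapply filterlim_comp. exact Ha. apply filterlim_norm. }
  assert (H2 : is_lim_seq (sum_n b) L) by exact Hb.
  pose proof (is_lim_seq_le _ _ _ _ (fun N => sum_n_Cmod a b N H) H1 H2) as H3.
  exact H3.
Qed.

Lemma Cseries_eq (a : nat -> C) l : is_series (V:=C_NormedModule) a l -> Cseries a = l.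
Proof.
  intros H. unfold Cseries.
  apply (iota_unique (V:=C_CompleteNormedModule)).
  - intros y Hy. assert (Hy' : is_series (V:=C_NormedModule) a y) by exact Hy.
    assert (FF : ProperFilter' (@eventually)) by (apply Proper_StrongProper, eventually_filter).
    exact (filterlim_locally_unique (T:=nat) (K:=C_AbsRing) (V:=C_NormedModule) (F:=eventually) (FF:=FF) (sum_n a) y l Hy' H).
  - exact H.
Qed.

Lemma Cmod_Cpow z n : Cmod (Defs.Cpow z n) = Cmod z ^ n.
Proof. induction n; simpl. apply Cmod_1. rewrite Cmod_mult, IHn. reflexivity. Qed.

Definition eterm (z : C) (n : nat) : C := Cmult (RtoC (/ INR (fact n))) (Defs.Cpow z n).

Lemma Cmod_RtoC_pos (x : R) : 0 <= x -> Cmod (RtoC x) = x.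
Proof. intros. rewrite Cmod_R. apply Rabs_pos_eq. auto. Qed.

Lemma Cmod_eterm z n : Cmod (eterm z n) = Cmod z ^ n / INR (fact n).
Proof.
  unfold eterm. rewrite Cmod_mult, Cmod_Cpow, Cmod_RtoC_pos. unfold Rdiv. ring.
  left. apply Rinv_0_lt_compat, INR_fact_lt_0.
Qed.

Lemma exp_series_R (x : R) : is_series (fun n => x ^ n / INR (fact n)) (exp x).
Proof.
  pose proof (is_exp_Reals x) as H. unfold is_pseries in H.
  eapply is_series_ext; [|exact H]. intros n. simpl.
  rewrite pow_n_pow. unfold scal; simpl. unfold mult; simpl. unfold Rdiv. ring.
Qed.

Lemma Cexp_series z : is_series (V:=C_NormedModule) (eterm z) (Cexp z).
Proof.
  assert (Hex : ex_series (V:=C_CompleteNormedModule) (eterm z)).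
  { apply (ex_series_le (K:=C_AbsRing) (V:=C_CompleteNormedModule) _ (fun n => Cmod z ^ n / INR (fact n))).
    intros n. rewrite <- Cmod_eterm. apply Rle_refl.
    eexists. apply exp_series_R. }
  destruct Hex as [l Hl]. unfold Cexp. rewrite (Cseries_eq _ l). exact Hl. exact Hl.
Qed.

Lemma RtoC_INR_S n : RtoC (INR (S n)) = Cplus (RtoC (INR n)) (RtoC 1).
Proof. rewrite S_INR. apply injective_projections; simpl; ring. Qed.

Lemma Dbound (z h : C) n :
  Cmod (Cminus (Cminus (Defs.Cpow (Cplus z h) (S (S n))) (Defs.Cpow z (S (S n))))
               (Cmult (RtoC (INR (S (S n)))) (Cmult h (Defs.Cpow z (S n)))))
  <= INR (S n) * INR (S (S n)) / 2 * Cmod h ^ 2 * (Cmod z + Cmod h) ^ n.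
Proof.
  induction n.
  - match goal with |- Cmod ?X <= _ => replace X with (Cmult h h) end.
    + rewrite Cmod_mult. simpl. right. field.
    + cbn [Defs.Cpow]. rewrite !RtoC_INR_S. change (INR 0) with 0. ring.
  - set (P := Defs.Cpow z (S n)). set (Q := Defs.Cpow (Cplus z h) (S (S n))).
    change (Defs.Cpow (Cplus z h) (S (S (S n)))) with (Cmult (Cplus z h) Q).
    change (Defs.Cpow z (S (S (S n)))) with (Cmult z (Cmult z P)).
    change (Defs.Cpow z (S (S n))) with (Cmult z P) in *.
    fold Q in IHn. fold P in IHn.
    rewrite (RtoC_INR_S (S (S n))) in *.
    replace (Cminus (Cminus (Cmult (Cplus z h) Q) (Cmult z (Cmult z P)))
        (Cmult (Cplus (RtoC (INR (S (S n)))) (RtoC 1)) (Cmult h (Cmult z P))))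
      with (Cplus (Cmult (Cplus z h) (Cminus (Cminus Q (Cmult z P)) (Cmult (RtoC (INR (S (S n)))) (Cmult h P))))
                  (Cmult (RtoC (INR (S (S n)))) (Cmult (Cmult h h) P))) by ring.
    eapply Rle_trans. apply Cmod_triangle.
    rewrite !Cmod_mult.
    assert (Hz : Cmod (Cplus z h) <= Cmod z + Cmod h) by apply Cmod_triangle.
    assert (HP : Cmod P <= (Cmod z + Cmod h) ^ S n).
    { unfold P. rewrite Cmod_Cpow.
      pose proof (Cmod_ge_0 z); pose proof (Cmod_ge_0 h).
      apply pow_incr. lra. }
    rewrite Cmod_R, Rabs_pos_eq by apply pos_INR.
    assert (H0 : 0 <= Cmod (Cminus (Cminus Q (Cmult z P)) (Cmult (RtoC (INR (S (S n)))) (Cmult h P)))) by apply Cmod_ge_0.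
    pose proof (Cmod_ge_0 h). pose proof (Cmod_ge_0 (Cplus z h)).
    pose proof (Cmod_ge_0 P).
    set (R0 := Cmod z + Cmod h) in *.
    assert (HR : 0 <= R0) by (unfold R0; pose proof (Cmod_ge_0 z); lra).
    assert (Hpn : 0 <= R0 ^ n) by (apply pow_le; lra).
    replace (INR (S (S n))) with (INR n + 2) in * by (rewrite !S_INR; ring).
    replace (INR (S (S (S n)))) with (INR n + 3) by (rewrite !S_INR; ring).
    replace (INR (S n)) with (INR n + 1) in * by (rewrite !S_INR; ring).
    pose proof (pos_INR n).
    simpl. simpl in HP, IHn.
    set (D := Cmod (Cminus (Cminus Q (Cmult z P)) (Cmult (RtoC (INR n + 2)) (Cmult h P)))) in *.
    set (hh := Cmod h) in *.
    set (X := Cmod P) in *.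
    set (Y := Cmod (Cplus z h)) in *.
    assert (Y * D <= R0 * ((INR n + 1) * (INR n + 2) / 2 * (hh * (hh * 1)) * R0 ^ n)).
    { apply Rmult_le_compat; lra. }
    assert ((INR n + 2) * (hh * hh * X) <= (INR n + 2) * (hh * hh * (R0 * (R0 ^ n)))).
    { apply Rmult_le_compat_l. lra. apply Rmult_le_compat_l. nra. lra. }
    nra.
Qed.

Definition bterm (z h : C) (n : nat) : C :=
  match n with O => RtoC 0 | S k => Cmult h (eterm z k) end.

Lemma bterm_series z h : is_series (V:=C_NormedModule) (bterm z h) (Cmult h (Cexp z)).
Proof.
  apply is_series_decr_1.
  pose proof (is_series_scal (K:=C_AbsRing) (V:=C_NormedModule) h _ _ (Cexp_series z)) as H.
  match goal with |- is_series _ ?L => replace L with (Cmult h (Cexp z)) end.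
  - exact H.
  - simpl. change (Cmult h (Cexp z) = Cplus (Cmult h (Cexp z)) (Copp (RtoC 0))). ring.
Qed.

Definition aterm (z h : C) (n : nat) : C :=
  Cminus (Cminus (eterm (Cplus z h) n) (eterm z n)) (bterm z h n).

Lemma aterm_series z h : is_series (V:=C_NormedModule) (aterm z h)
   (Cminus (Cminus (Cexp (Cplus z h)) (Cexp z)) (Cmult h (Cexp z))).
Proof.
  apply (is_series_minus (V:=C_NormedModule)).
  apply (is_series_minus (V:=C_NormedModule)). apply Cexp_series. apply Cexp_series.
  apply bterm_series.
Qed.

Lemma aterm_SS z h n : aterm z h (S (S n)) =
  Cmult (RtoC (/ INR (fact (S (S n)))))
   (Cminus (Cminus (Defs.Cpow (Cplus z h) (S (S n))) (Defs.Cpow z (S (S n))))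
               (Cmult (RtoC (INR (S (S n)))) (Cmult h (Defs.Cpow z (S n))))).
Proof.
  unfold aterm, bterm, eterm.
  change (fact (S (S n))) with (S (S n) * fact (S n))%nat.
  rewrite mult_INR.
  assert (Hm : INR (S (S n)) <> 0) by (apply not_0_INR; lia).
  assert (Hf : INR (fact (S n)) <> 0) by (apply INR_fact_neq_0).
  rewrite Rinv_mult.
  rewrite RtoC_mult.
  set (m := INR (S (S n))) in *. set (f := INR (fact (S n))) in *.
  assert (E : Cmult (RtoC m) (RtoC (/ m)) = RtoC 1).
  { rewrite <- RtoC_mult, Rinv_r by exact Hm. reflexivity. }
  transitivity (Cminus (Cmult (Cmult (RtoC (/ m)) (RtoC (/ f))) (Cminus (Defs.Cpow (Cplus z h) (S (S n))) (Defs.Cpow z (S (S n)))))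
     (Cmult (Cmult (RtoC (/ f)) (Cmult h (Defs.Cpow z (S n)))) (Cmult (RtoC m) (RtoC (/ m))))).
  - rewrite E. ring.
  - ring.
Qed.

Lemma aterm_bound z h n :
  Cmod (aterm z h (S (S n))) <= Cmod h ^ 2 * ((Cmod z + Cmod h) ^ n / INR (fact n)).
Proof.
  rewrite aterm_SS, Cmod_mult, Cmod_RtoC_pos.
  2: { left. apply Rinv_0_lt_compat, INR_fact_lt_0. }
  pose proof (Dbound z h n) as HD.
  change (fact (S (S n))) with (S (S n) * (S n * fact n))%nat.
  rewrite !mult_INR.
  pose proof (INR_fact_lt_0 n). pose proof (pos_INR n).
  replace (INR (S (S n))) with (INR n + 2) in * by (rewrite !S_INR; ring).
  replace (INR (S n)) with (INR n + 1) in * by (rewrite !S_INR; ring).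
  set (D := Cmod _) in *.
  assert (HR : 0 <= (Cmod z + Cmod h) ^ n) by (apply pow_le; pose proof (Cmod_ge_0 z); pose proof (Cmod_ge_0 h); lra).
  pose proof (pow2_ge_0 (Cmod h)).
  set (W := Cmod h ^ 2 * (Cmod z + Cmod h) ^ n) in *.
  assert (HW : 0 <= W) by (unfold W; nra).
  apply (Rmult_le_reg_l ((INR n + 2) * ((INR n + 1) * INR (fact n)))).
  { apply Rmult_lt_0_compat. lra. apply Rmult_lt_0_compat; lra. }
  rewrite <- Rmult_assoc, Rinv_r by (apply Rgt_not_eq, Rmult_lt_0_compat; [lra|apply Rmult_lt_0_compat; lra]).
  replace ((INR n + 2) * ((INR n + 1) * INR (fact n)) * (Cmod h ^ 2 * ((Cmod z + Cmod h) ^ n / INR (fact n))))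
    with ((INR n + 2) * (INR n + 1) * W) by (unfold W; field; lra).
  replace ((INR n + 1) * (INR n + 2) / 2 * Cmod h ^ 2 * (Cmod z + Cmod h) ^ n) with ((INR n + 1) * (INR n + 2) / 2 * W) in HD by (unfold W; ring).
  nra.
Qed.

Lemma series_shift0 (a : nat -> C) l : is_series (V:=C_NormedModule) a l -> a O = RtoC 0 ->
  is_series (V:=C_NormedModule) (fun k => a (S k)) l.
Proof.
  intros H H0. apply is_series_incr_1.
  match goal with |- is_series _ ?L => replace L with l end. exact H.
  rewrite H0. change (l = Cplus l (RtoC 0)). rewrite Cplus_0_r. reflexivity.
Qed.

Lemma aterm0 z h : aterm z h O = RtoC 0.
Proof. unfold aterm, bterm, eterm. simpl. ring. Qed.
Lemma aterm1 z h : aterm z h 1 = RtoC 0.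
Proof. unfold aterm, bterm, eterm. simpl. rewrite Rinv_1. ring. Qed.

Lemma exp_bound z h :
  Cmod (Cminus (Cminus (Cexp (Cplus z h)) (Cexp z)) (Cmult h (Cexp z)))
  <= Cmod h ^ 2 * exp (Cmod z + Cmod h).
Proof.
  pose proof (aterm_series z h) as H.
  apply series_shift0 in H; [|apply aterm0].
  apply series_shift0 in H; [|apply aterm1].
  eapply series_Cmod_le.
  - exact H.
  - apply (is_series_scal (K:=R_AbsRing) (V:=R_NormedModule) (Cmod h ^ 2)). apply exp_series_R.
  - intros n. apply aterm_bound.
Qed.

Lemma deriv_of_bound (f : C -> C) (z l : C) (K : R) :
  0 <= K ->
  (forall h, Cmod h <= 1 -> Cmod (Cminus (Cminus (f (Cplus z h)) (f z)) (Cmult h l)) <= K * Cmod h ^ 2) ->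
  Cderiv f z l.
Proof.
  intros HK Hb. unfold Cderiv, is_derive. split.
  - apply (is_linear_scal_l (K:=C_AbsRing) (V:=C_NormedModule)).
  - intros x Hx. assert (Ex : z = x) by (apply (is_filter_lim_locally_unique (K:=C_AbsRing) (V:=AbsRing_NormedModule C_AbsRing)); exact Hx). subst x.
    intros eps. apply (locally_norm_le_locally (K:=C_AbsRing) (V:=AbsRing_NormedModule C_AbsRing)).
    assert (Hd : 0 < Rmin 1 (eps / (K + 1))).
    { apply Rmin_pos. lra. apply Rdiv_lt_0_compat. apply cond_pos. lra. }
    exists (mkposreal _ Hd). intros y Hy. unfold ball_norm in Hy. simpl in Hy.
    change (Cmod (Cminus (Cminus (f y) (f z)) (Cmult (Cminus y z) l)) <= eps * Cmod (Cminus y z)).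
    change (Cmod (Cminus y z) < Rmin 1 (eps / (K + 1))) in Hy.
    set (h := Cminus y z) in *.
    assert (Ey : forall y0 : C, y0 = Cplus z (Cminus y0 z)) by (intros; ring).
    rewrite (Ey y). fold h.
    assert (H1 : Cmod h <= 1) by (pose proof (Rmin_l 1 (eps / (K + 1))); lra).
    eapply Rle_trans. apply Hb. exact H1.
    assert (H2 : Cmod h <= eps / (K + 1)) by (pose proof (Rmin_r 1 (eps / (K + 1))); lra).
    pose proof (Cmod_ge_0 h). pose proof (cond_pos eps).
    assert (K * Cmod h <= eps).
    { apply Rle_trans with ((K + 1) * Cmod h). nra.
      apply Rmult_le_reg_r with (/ (K+1)). apply Rinv_0_lt_compat; lra.
      replace ((K + 1) * Cmod h * / (K + 1)) with (Cmod h) by (field; lra). exact H2. }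
    simpl. nra.
Qed.

Lemma Cexp_deriv z : Cderiv Cexp z (Cexp z).
Proof.
  apply deriv_of_bound with (K := exp (Cmod z + 1)).
  - left. apply exp_pos.
  - intros h Hh. eapply Rle_trans. apply exp_bound.
    rewrite Rmult_comm. apply Rmult_le_compat_r. apply pow2_ge_0.
    apply exp_le_3 || (destruct (Rle_lt_or_eq_dec _ _ Hh); [left; apply exp_increasing; lra | right; subst; f_equal; lra]).
Qed.

Lemma conv f z l : is_derive (K:=C_AbsRing) (V:=AbsRing_NormedModule C_AbsRing) f z l -> Cderiv f z l.
Proof. intros [H1 H2]. split.
 - destruct H1 as [La Lb [M [HM HM2]]]. split. exact La. exact Lb. exists M. split. exact HM. exact HM2.
 - exact H2. Qed.
Lemma conv' f z l : Cderiv f z l -> is_derive (K:=C_AbsRing) (V:=AbsRing_NormedModule C_AbsRing) f z l.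
Proof. intros [H1 H2]. split.
 - destruct H1 as [La Lb [M [HM HM2]]]. split. exact La. exact Lb. exists M. split. exact HM. exact HM2.
 - exact H2. Qed.

Lemma CD_ext f g z l : (forall t, f t = g t) -> Cderiv f z l -> Cderiv g z l.
Proof. intros E H. unfold Cderiv in *. eapply is_derive_ext; eauto. Qed.

Lemma CD_eq f z l l' : l = l' -> Cderiv f z l -> Cderiv f z l'.
Proof. intros E H. subst. exact H. Qed.

Lemma CD_lin c z : Cderiv (fun v => Cmult c v) z c.
Proof.
  apply deriv_of_bound with (K := 0). lra.
  intros h _. replace (Cminus (Cminus (Cmult c (Cplus z h)) (Cmult c z)) (Cmult h c)) with (RtoC 0) by ring.
  rewrite Cmod_0. lra.
Qed.

Lemma CD_comp f g z lf lg : Cderiv f (g z) lf -> Cderiv g z lg -> Cderiv (fun v => f (g v)) z (Cmult lg lf).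
Proof.
  intros Hf Hg. apply conv' in Hg.
  exact (is_derive_comp (K:=C_AbsRing) (V:=C_NormedModule) f g z lf lg Hf Hg).
Qed.

Lemma CD_minus f g z lf lg : Cderiv f z lf -> Cderiv g z lg -> Cderiv (fun v => Cminus (f v) (g v)) z (Cminus lf lg).
Proof.
  intros Hf Hg. exact (is_derive_minus (K:=C_AbsRing) (V:=C_NormedModule) f g z lf lg Hf Hg).
Qed.

Lemma CD_plus f g z lf lg : Cderiv f z lf -> Cderiv g z lg -> Cderiv (fun v => Cplus (f v) (g v)) z (Cplus lf lg).
Proof.
  intros Hf Hg. exact (is_derive_plus (K:=C_AbsRing) (V:=C_NormedModule) f g z lf lg Hf Hg).
Qed.

Lemma CD_mulc f z l k : Cderiv f z l -> Cderiv (fun v => Cmult (f v) k) z (Cmult l k).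
Proof.
  intros Hf. apply conv' in Hf.
  exact (is_derive_scal_l (K:=C_AbsRing) (V:=C_NormedModule) f z l k Hf).
Qed.

Lemma CD_mult f g z lf lg : Cderiv f z lf -> Cderiv g z lg ->
  Cderiv (fun v => Cmult (f v) (g v)) z (Cplus (Cmult lf (g z)) (Cmult (f z) lg)).
Proof.
  intros Hf Hg. apply conv' in Hf. apply conv' in Hg. apply conv.
  exact (is_derive_mult (K:=C_AbsRing) f g z lf lg Hf Hg Cmult_comm).
Qed.

Lemma expc_deriv c z : Cderiv (fun v => Cexp (Cmult c v)) z (Cmult c (Cexp (Cmult c z))).
Proof. apply CD_comp. apply Cexp_deriv. apply CD_lin. Qed.

Lemma Ci_neq0 : Ci <> RtoC 0.
Proof. intros H. injection H. lra. Qed.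

Lemma two_i_neq0 : Cmult (RtoC 2) Ci <> RtoC 0.
Proof. intros H. injection H. lra. Qed.

Lemma Csin_deriv z : Cderiv Csin z (Ccos z).
Proof.
  pose proof (CD_mulc _ z _ (Cinv (Cmult (RtoC 2) Ci)) (CD_minus _ _ z _ _ (expc_deriv Ci z) (expc_deriv (Copp Ci) z))) as H.
  eapply CD_ext. 2: eapply CD_eq. 3: exact H.
  - intros t. unfold Csin, Cdiv. f_equal. f_equal. f_equal. ring.
  - unfold Ccos. replace (Cmult (Copp Ci) z) with (Copp (Cmult Ci z)) by ring.
    field; repeat split; first [apply Ci_neq0 | apply two_i_neq0 | (intros E; injection E; lra)].
Qed.

Lemma Ccos_deriv z : Cderiv Ccos z (Copp (Csin z)).
Proof.
  pose proof (CD_mulc _ z _ (Cinv (RtoC 2)) (CD_plus _ _ z _ _ (expc_deriv Ci z) (expc_deriv (Copp Ci) z))) as H.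
  eapply CD_ext. 2: eapply CD_eq. 3: exact H.
  - intros t. unfold Ccos, Cdiv. f_equal. f_equal. f_equal. ring.
  - unfold Csin. replace (Cmult (Copp Ci) z) with (Copp (Cmult Ci z)) by ring.
    generalize (Cexp (Cmult Ci z)) (Cexp (Copp (Cmult Ci z))). intros [a b] [c d].
    unfold Cdiv, Cminus, Cinv, Cmult, Cplus, Copp, Ci, RtoC; simpl.
    apply injective_projections; simpl; field.
Qed.

Lemma comp_deriv0 (F : C -> C) (w : C) (p : C -> R)
  (Hp : forall c, Rabs (p c) <= Cmod c)
  (Hpm : forall a b, p (Cminus a b) = p a - p b) :
  (forall v, Cderiv F v (RtoC 0)) ->
  forall t, derivable_pt_lim (fun s => p (F (Cmult (RtoC s) w))) t 0.
Proof.
  intros HF t eps Heps.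
  destruct (HF (Cmult (RtoC t) w)) as [_ H].
  assert (He' : 0 < eps / (2 * (Cmod w + 1))).
  { pose proof (Cmod_ge_0 w). apply Rdiv_lt_0_compat. lra. lra. }
  specialize (H (Cmult (RtoC t) w) (fun P HP => HP) (mkposreal _ He')).
  destruct H as [d Hd].
  assert (Hd' : 0 < d / (Cmod w + 1)).
  { pose proof (Cmod_ge_0 w). apply Rdiv_lt_0_compat. apply cond_pos. lra. }
  exists (mkposreal _ Hd'). intros h Hh0 Hh. simpl in Hh.
  set (y := Cmult (RtoC (t + h)) w).
  assert (Ey : Cminus y (Cmult (RtoC t) w) = Cmult (RtoC h) w).
  { unfold y. rewrite RtoC_plus. ring. }
  assert (Hmod : Cmod (Cminus y (Cmult (RtoC t) w)) = Rabs h * Cmod w).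
  { rewrite Ey, Cmod_mult, Cmod_R. reflexivity. }
  pose proof (Cmod_ge_0 w) as Hw0.
  assert (Hball : Rabs h * Cmod w < d).
  { apply Rle_lt_trans with (Rabs h * (Cmod w + 1)). 
    apply Rmult_le_compat_l. apply Rabs_pos. lra.
    apply Rmult_lt_reg_r with (/ (Cmod w + 1)). apply Rinv_0_lt_compat; lra.
    replace (Rabs h * (Cmod w + 1) * / (Cmod w + 1)) with (Rabs h) by (field; lra).
    exact Hh. }
  specialize (Hd y).
  assert (HB : Cmod (Cminus (Cminus (F y) (F (Cmult (RtoC t) w))) (Cmult (Cminus y (Cmult (RtoC t) w)) (RtoC 0)))
      <= eps / (2 * (Cmod w + 1)) * Cmod (Cminus y (Cmult (RtoC t) w))).
  { apply Hd. change (Cmod (Cminus y (Cmult (RtoC t) w)) < d). lra. }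
  replace (Cminus (Cminus (F y) (F (Cmult (RtoC t) w))) (Cmult (Cminus y (Cmult (RtoC t) w)) (RtoC 0)))
    with (Cminus (F y) (F (Cmult (RtoC t) w))) in HB by ring.
  rewrite Hmod in HB.
  pose proof (Hp (Cminus (F y) (F (Cmult (RtoC t) w)))) as Hpp.
  rewrite Hpm in Hpp. fold y.
  assert (Habs : 0 < Rabs h) by (apply Rabs_pos_lt; exact Hh0).
  replace ((p (F y) - p (F (Cmult (RtoC t) w))) / h - 0) with ((p (F y) - p (F (Cmult (RtoC t) w))) / h) by ring.
  unfold Rdiv. rewrite Rabs_mult, Rabs_inv.
  apply Rmult_lt_reg_r with (Rabs h). exact Habs.
  rewrite Rmult_assoc, Rinv_l by lra. rewrite Rmult_1_r.
  assert (eps / (2 * (Cmod w + 1)) * (Rabs h * Cmod w) < eps * Rabs h).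
  { replace (eps / (2 * (Cmod w + 1)) * (Rabs h * Cmod w)) with (eps * Rabs h * (Cmod w / (2 * (Cmod w + 1)))) by (field; lra).
    rewrite <- (Rmult_1_r (eps * Rabs h)) at 2.
    apply Rmult_lt_compat_l. apply Rmult_lt_0_compat; lra.
    apply Rmult_lt_reg_r with (2 * (Cmod w + 1)). lra.
    replace (Cmod w / (2 * (Cmod w + 1)) * (2 * (Cmod w + 1))) with (Cmod w) by (field; lra). lra. }
  lra.
Qed.

Lemma CD_zero_const (F : C -> C) : (forall v, Cderiv F v (RtoC 0)) -> forall w, F w = F (RtoC 0).
Proof.
  intros HF w.
  assert (Hc : forall (p : C -> R), (forall c, Rabs (p c) <= Cmod c) -> (forall a b, p (Cminus a b) = p a - p b) ->
     p (F (Cmult (RtoC 1) w)) = p (F (Cmult (RtoC 0) w))).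
  { intros p Hp Hpm. symmetry. apply (eq_is_derive (V:=R_NormedModule) (fun s => p (F (Cmult (RtoC s) w))) 0 1).
    - intros t _. apply is_derive_Reals. apply comp_deriv0; auto.
    - lra. }
  replace w with (Cmult (RtoC 1) w) at 1 by ring.
  replace (F (RtoC 0)) with (F (Cmult (RtoC 0) w)) by (f_equal; ring).
  apply injective_projections.
  - apply (Hc fst). intros c. eapply Rle_trans. 2: apply Rmax_Cmod. apply Rmax_l. intros a b. reflexivity.
  - apply (Hc snd). intros c. eapply Rle_trans. 2: apply Rmax_Cmod. apply Rmax_r. intros a b. reflexivity.
Qed.

Lemma Cexp_0 : Cexp (RtoC 0) = RtoC 1.
Proof.
  unfold Cexp. apply Cseries_eq.
  assert (Hs : forall N, sum_n (fun n => Cmult (RtoC (/ INR (fact n))) (Defs.Cpow (RtoC 0) n)) N = RtoC 1).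
  { induction N.
    - rewrite sum_O. simpl. rewrite Rinv_1. ring.
    - rewrite sum_Sn, IHN. change (Cplus (RtoC 1) (Cmult (RtoC (/ INR (fact (S N)))) (Cmult (RtoC 0) (Defs.Cpow (RtoC 0) N))) = RtoC 1). ring. }
  unfold is_series. eapply filterlim_ext. intros N. symmetry. apply Hs.
  apply filterlim_const.
Qed.

Lemma Cexp_inv w : Cmult (Cexp w) (Cexp (Copp w)) = RtoC 1.
Proof.
  set (Q := fun v => Cmult (Cexp v) (Cexp (Cmult (RtoC (-1)) v))).
  assert (HQ : forall v, Cderiv Q v (RtoC 0)).
  { intros v. eapply CD_eq. 2: apply (CD_mult _ _ v _ _ (Cexp_deriv v) (expc_deriv (RtoC (-1)) v)).
    ring. }
  pose proof (CD_zero_const Q HQ w) as H. unfold Q in H.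
  replace (Copp w) with (Cmult (RtoC (-1)) w) by (apply injective_projections; simpl; ring).
  rewrite H. replace (Cmult (RtoC (-1)) (RtoC 0)) with (RtoC 0) by ring.
  rewrite Cexp_0. ring.
Qed.

Lemma Cpyth z : Cplus (Cmult (Csin z) (Csin z)) (Cmult (Ccos z) (Ccos z)) = RtoC 1.
Proof.
  unfold Csin, Ccos.
  pose proof (Cexp_inv (Cmult Ci z)) as H.
  generalize dependent (Cexp (Cmult Ci z)). generalize (Cexp (Copp (Cmult Ci z))). intros E2 E1 H.
  assert (Hi : Cmult (Cmult (RtoC 2) Ci) (Cmult (RtoC 2) Ci) = RtoC (-4)).
  { apply injective_projections; simpl; ring. }
  assert (Hd : forall A, Cmult (Cdiv A (Cmult (RtoC 2) Ci)) (Cdiv A (Cmult (RtoC 2) Ci)) = Cdiv (Cmult A A) (RtoC (-4))).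
  { intros A. rewrite <- Hi. field. repeat split; first [apply Ci_neq0 | apply two_i_neq0 | (intros E; injection E; lra)]. }
  rewrite Hd. rewrite <- H. field; repeat split; intros E; injection E; lra.

Qed.

Lemma CD_unique f z l1 l2 : Cderiv f z l1 -> Cderiv f z l2 -> l1 = l2.
Proof.
  intros H1 H2. rewrite <- (is_C_derive_unique f z l1 H1). apply is_C_derive_unique. exact H2.
Qed.

Theorem theorem3 (kappa : R) (hk0 : 0 < kappa) (hk1 : kappa < 1)
  (r : R) (hr : 0 < r)
  (phi psi delta psi' d' : C -> C)
  (hphi_hol : forall w, in_disc r w -> Cderiv phi w (delta w))
  (hphi0 : phi (RtoC 0) = RtoC 0)
  (hphi_inv : forall w, in_disc r w -> u_of kappa (phi w) = w)
  (hpsi_hol : forall w, in_disc r w -> Cderiv psi w (psi' w))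
  (hpsi0 : psi (RtoC 0) = RtoC 0)
  (hpsi : forall w, in_disc r w -> Csin (psi w) = Cmult (RtoC kappa) (Csin (phi w)))
  (hd' : forall w, in_disc r w -> Cderiv (fun v => Ccos (psi v)) w (d' w)) :
  let lambda := sqrt (1 - kappa ^ 2) in
  forall w, in_disc r w ->
    let d := Ccos (psi w) in
    Cmult (Cmult d d) (Cmult (d' w) (d' w)) =
    Cmult (Cmult (delta w) (delta w))
          (Cmult (Cminus (RtoC 1) (Cmult d d))
                 (Cminus (Cmult d d) (RtoC (lambda ^ 2)))).
Proof.
  intros lambda w Hw d.
  assert (Hl : lambda ^ 2 = 1 - kappa ^ 2).
  { unfold lambda. rewrite pow2_sqrt. reflexivity. nra. }
  assert (Hd'eq : d' w = Cmult (psi' w) (Copp (Csin (psi w)))).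
  { apply (CD_unique (fun v => Ccos (psi v)) w). apply hd'. exact Hw.
    apply CD_comp. apply Ccos_deriv. apply hpsi_hol. exact Hw. }
  assert (H1 : Cmult (psi' w) (Ccos (psi w)) = Cmult (Cmult (delta w) (Ccos (phi w))) (RtoC kappa)).
  { apply (CD_unique (fun v => Csin (psi v)) w).
    - apply CD_comp. apply Csin_deriv. apply hpsi_hol. exact Hw.
    - unfold Cderiv. apply (is_derive_ext_loc (K:=C_AbsRing) (V:=C_NormedModule) (fun v => Cmult (Csin (phi v)) (RtoC kappa))).
      + assert (He : 0 < r - Cmod w) by (unfold in_disc in Hw; lra).
        exists (mkposreal _ He). intros v Hv.
        change (Cmod (Cminus v w) < r - Cmod w) in Hv.
        rewrite hpsi. apply Cmult_comm.
        unfold in_disc.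
        replace v with (Cplus w (Cminus v w)) by ring.
        eapply Rle_lt_trans. apply Cmod_triangle. lra.
      + apply CD_mulc. apply CD_comp. apply Csin_deriv. apply hphi_hol. exact Hw. }
  pose proof (Cpyth (psi w)) as P1. pose proof (Cpyth (phi w)) as P2.
  pose proof (hpsi w Hw) as HS.
  fold d in P1, H1, Hd'eq.
  rewrite Hd'eq, Hl.
  set (S := Csin (psi w)) in *. set (s := Csin (phi w)) in *. set (c := Ccos (phi w)) in *.
  set (p := psi' w) in *. set (dl := delta w) in *.
  assert (Hdd : Cmult d d = Cminus (RtoC 1) (Cmult S S)) by (rewrite <- P1; ring).
  assert (Hcc : Cmult c c = Cminus (RtoC 1) (Cmult s s)) by (rewrite <- P2; ring).
  transitivity (Cmult (Cmult S S) (Cmult (Cmult p d) (Cmult p d))). ring.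
  rewrite H1.
  transitivity (Cmult (Cmult (Cmult S S) (Cmult (Cmult dl dl) (RtoC (kappa * kappa)))) (Cmult c c)).
  { rewrite RtoC_mult. ring. }
  rewrite Hcc, Hdd, HS.
  replace (RtoC (1 - kappa ^ 2)) with (Cminus (RtoC 1) (Cmult (RtoC kappa) (RtoC kappa)))
    by (apply injective_projections; simpl; ring).
  rewrite RtoC_mult. ring.
Qed.
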